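(* Let $(N_r)_{r\in\mathbb{Z}}$ be the Narayana sequence, let $a,b,r$ be integers with $1\le b\le a$ and $m=ar+b>a$. Then for every integer $s\ge 0$ there exist integers $\alpha,\beta,\gamma$ such that $$N_{ar+b}=\alpha N_{a(s+2)+b}+\beta N_{a(s+1)+b}+\gamma N_{as+b};$$ in particular (taking $s=0$) $N_m$ is an integer linear combination of $N_{2a+b}$, $N_{a+b}$ and $N_b$.
   Context: The Narayana sequence $(N_r)_{r\in\mathbb{Z}}$ is defined by $N_0=0$, $N_1=N_2=1$ and $N_r=N_{r-1}+N_{r-3}$ for all integers $r$ (extended to negative indices via $N_{r-3}=N_r-N_{r-1}$). The numbers $N_b, N_{a+b}, N_{2a+b},\dots$ are the entries of the $b$-th column of the table whose rows are $(N_{ka+1},\dots,N_{ka+a})$, $k=0,1,2,\dots$; the claim says $N_{ar+b}$ is an integer combination of any three consecutive entries of this column. *)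

(* Defs.v *)
From Stdlib Require Import ZArith Lia.
Open Scope Z_scope.

Fixpoint nar_pos (n : nat) : Z :=
  match n with
  | O => 0
  | S O => 1
  | S (S O) => 1
  | S ((S (S k)) as n2) => nar_pos n2 + nar_pos k
  end.

(* M_k := N_{-k}, obtained from the backward recurrence N_{r-3} = N_r - N_{r-1}:
   M_0 = 0, M_1 = N_2 - N_1 = 0, M_2 = N_1 - N_0 = 1, M_{k+3} = M_k - M_{k+1}. *)
Fixpoint nar_neg (k : nat) : Z :=
  match k with
  | O => 0
  | S O => 0
  | S (S O) => 1
  | S (S (S j as k1) as k2) => nar_neg j - nar_neg k1
  end.

Definition narayana (r : Z) : Z :=
  if Z.leb 0 r then nar_pos (Z.to_nat r) else nar_neg (Z.to_nat (- r)).

Lemma narayana_0 : narayana 0 = 0. Proof. reflexivity. Qed.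
Lemma narayana_1 : narayana 1 = 1. Proof. reflexivity. Qed.
Lemma narayana_2 : narayana 2 = 1. Proof. reflexivity. Qed.
Example narayana_test :
  narayana 10 = narayana 9 + narayana 7 /\ narayana 1 = narayana 0 + narayana (-2)
  /\ narayana (-3) = narayana (-4) + narayana (-6)
  /\ narayana 2 = narayana 1 + narayana (-1).
Proof. repeat split; reflexivity. Qed.

(* Main.v *)
Require Import Defs.
From Stdlib Require Import ZArith Lia.
Open Scope Z_scope.

Lemma nar_posE (k : nat) : narayana (Z.of_nat k) = nar_pos k.
Proof. unfold narayana. rewrite Nat2Z.id. destruct (Z.leb_spec 0 (Z.of_nat k)); [reflexivity| lia]. Qed.

Lemma nar_negE (k : nat) : narayana (- Z.of_nat k) = nar_neg k.
Proof.
  unfold narayana. destruct k as [|k]; [reflexivity|].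
  destruct (Z.leb_spec 0 (- Z.of_nat (S k))); [lia|].
  rewrite Z.opp_involutive, Nat2Z.id. reflexivity.
Qed.

Lemma nrec (n : Z) : narayana (n + 3) = narayana (n + 2) + narayana n.
Proof.
  destruct (Z.leb_spec 0 n) as [H|H].
  - destruct (Z_of_nat_complete n H) as [k ->].
    replace (Z.of_nat k + 3) with (Z.of_nat (S (S (S k)))) by lia.
    replace (Z.of_nat k + 2) with (Z.of_nat (S (S k))) by lia.
    rewrite !nar_posE. reflexivity.
  - destruct (Z.leb_spec n (-3)) as [H'|H'].
    + destruct (Z_of_nat_complete (- n - 3)) as [k Hk]; [lia|].
      replace n with (- Z.of_nat (S (S (S k)))) by lia.
      replace (- Z.of_nat (S (S (S k))) + 3) with (- Z.of_nat k) by lia.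
      replace (- Z.of_nat (S (S (S k))) + 2) with (- Z.of_nat (S k)) by lia.
      rewrite !nar_negE. simpl. lia.
    + assert (n = -1 \/ n = -2) as [-> | ->] by lia; reflexivity.
Qed.

Definition D (x y z : Z) : Z :=
  let a11 := x+y+z in let a12 := x in let a13 := x+y in
  let a21 := x+y in let a22 := z in let a23 := x in
  let a31 := x in let a32 := y in let a33 := z in
  a11*(a22*a33 - a23*a32) - a12*(a21*a33 - a23*a31) + a13*(a21*a32 - a22*a31).

Definition E2 (x y z : Z) : Z :=
  let a11 := x+y+z in let a12 := x in let a13 := x+y in
  let a21 := x+y in let a22 := z in let a23 := x in
  let a31 := x in let a32 := y in let a33 := z in
  (a11*a22 - a12*a21) + (a11*a33 - a13*a31) + (a22*a33 - a23*a32).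

Lemma shift_ex (a : Z) : exists x y z, D x y z = 1 /\
  forall n, narayana (n + a) = x * narayana (n+2) + y * narayana (n+1) + z * narayana n.
Proof.
  induction a using Z.peano_ind.
  - exists 0, 0, 1. split; [reflexivity|]. intro n. rewrite Z.add_0_r. ring.
  - destruct IHa as [x [y [z [HD H]]]]. exists (x+y), z, x. split.
    + rewrite <- HD. unfold D. ring.
    + intro n. replace (n + Z.succ a) with ((n+1)+a) by lia. rewrite H.
      replace (n+1+2) with (n+3) by lia. replace (n+1+1) with (n+2) by lia.
      rewrite nrec. ring.
  - destruct IHa as [x [y [z [HD H]]]]. exists z, (x-z), y. split.
    + rewrite <- HD. unfold D. ring.
    + intro n. replace (n + Z.pred a) with ((n-1)+a) by lia. rewrite H.
      replace (n-1+2) with (n+1) by lia. replace (n-1+1) with n by lia.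
      pose proof (nrec (n-1)) as R.
      replace (n-1+3) with (n+2) in R by lia. replace (n-1+2) with (n+1) in R by lia.
      replace (narayana (n-1)) with (narayana (n+2) - narayana (n+1)) by lia. ring.
Qed.

Lemma triple_rec (a : Z) : exists c1 c2, forall n,
  narayana (n+a+a+a) = c1 * narayana (n+a+a) + c2 * narayana (n+a) + narayana n.
Proof.
  destruct (shift_ex a) as [x [y [z [HD H]]]].
  assert (L1 : forall m, narayana (m+a+1) = (x+y) * narayana (m+2) + z * narayana (m+1) + x * narayana m).
  { intro m. replace (m+a+1) with ((m+1)+a) by lia. rewrite H.
    replace (m+1+2) with (m+3) by lia. replace (m+1+1) with (m+2) by lia. rewrite nrec. ring. }
  assert (L2 : forall m, narayana (m+a+2) = (x+y+z) * narayana (m+2) + x * narayana (m+1) + (x+y) * narayana m).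
  { intro m. replace (m+a+2) with ((m+1)+a+1) by lia. rewrite L1.
    replace (m+1+2) with (m+3) by lia. replace (m+1+1) with (m+2) by lia. rewrite nrec. ring. }
  exists (x+y+3*z), (- E2 x y z). intro n.
  assert (G : narayana (n+a+a+a) = (x+y+3*z) * narayana (n+a+a) + (- E2 x y z) * narayana (n+a)
     + D x y z * narayana n).
  { rewrite (H (n+a+a)), (L1 (n+a)), (L2 (n+a)), (H (n+a)), (L1 n), (L2 n), (H n).
    unfold D, E2. ring. }
  rewrite HD, Z.mul_1_l in G. exact G.
Qed.

Theorem theorem5 (a b r : Z) (hb : 1 <= b <= a) (hm : a * r + b > a) :
  forall s : Z, 0 <= s ->
  exists alpha beta gamma : Z,
    narayana (a * r + b) =
      alpha * narayana (a * (s + 2) + b) + beta * narayana (a * (s + 1) + b)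
      + gamma * narayana (a * s + b).
Proof.
  intros s _.
  destruct (triple_rec a) as [c1 [c2 Hc]].
  set (u := fun k => narayana (a * k + b)).
  assert (Hu : forall k, u (k+3) = c1 * u (k+2) + c2 * u (k+1) + u k).
  { intro k. unfold u. pose proof (Hc (a*k+b)) as E.
    replace (a*(k+3)+b) with (a*k+b+a+a+a) by ring.
    replace (a*(k+2)+b) with (a*k+b+a+a) by ring.
    replace (a*(k+1)+b) with (a*k+b+a) by ring. exact E. }
  set (P := fun t => exists al be ga, u t = al * u (s+2) + be * u (s+1) + ga * u s).
  assert (Q : forall j, P (s+j) /\ P (s+j+1) /\ P (s+j+2)).
  { intro j. induction j using Z.peano_ind.
    - rewrite Z.add_0_r. split; [|split].
      + exists 0, 0, 1. ring.
      + exists 0, 1, 0. ring.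
      + exists 1, 0, 0. ring.
    - destruct IHj as [[a1 [b1 [g1 E1]]] [[a2 [b2 [g2 E2']]] [a3 [b3 [g3 E3]]]]].
      replace (s + Z.succ j) with (s+j+1) by lia.
      replace (s+j+1+1) with (s+j+2) by lia.
      split; [exists a2, b2, g2; exact E2'|]. split; [exists a3, b3, g3; exact E3|].
      replace (s+j+1+2) with (s+j+3) by lia.
      exists (c1*a3 + c2*a2 + a1), (c1*b3 + c2*b2 + b1), (c1*g3+c2*g2+g1).
      rewrite Hu, E1, E2', E3. ring.
    - destruct IHj as [[a1 [b1 [g1 E1]]] [[a2 [b2 [g2 E2']]] [a3 [b3 [g3 E3]]]]].
      replace (s + Z.pred j + 1) with (s+j) by lia.
      replace (s + Z.pred j + 2) with (s+j+1) by lia.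
      split; [|split; [exists a1, b1, g1; exact E1| exists a2, b2, g2; exact E2']].
      pose proof (Hu (s + Z.pred j)) as R.
      replace (s + Z.pred j + 3) with (s+j+2) in R by lia.
      replace (s + Z.pred j + 2) with (s+j+1) in R by lia.
      replace (s + Z.pred j + 1) with (s+j) in R by lia.
      exists (a3 - c1*a2 - c2*a1), (b3 - c1*b2 - c2*b1), (g3 - c1*g2 - c2*g1).
      replace (u (s + Z.pred j)) with (u (s+j+2) - c1 * u (s+j+1) - c2 * u (s+j)) by lia.
      rewrite E1, E2', E3. ring. }
  destruct (Q (r - s)) as [[al [be [ga E]]] _].
  replace (s + (r - s)) with r in E by ring.
  exists al, be, ga. exact E.
Qed.
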